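(* In the lower-bound instance for CTS-G described in the context, for any round $t$ and any optimal base arm $a\in\bar G_t$, we have $\Pr(w_{a,t}<\tau\mid\mathcal{F}_{t-1})\ge0.5$, where $\tau:=\Delta+\Delta/4$.
   Context: Top-$m$ instance: $N$ base arms with $N\ge400m$, $m\ge1$; every round any $m$ of the $N$ arms may be played. A set $G\subset[N]$ with $|G|=m$ is fixed; rewards are deterministic: $r_a=\Delta$ for $a\in G$ and $r_a=0$ otherwise, with $\Delta:=\frac45\sqrt{\frac{N\ln T}{T}}$ and $T>\frac{16}{25}N\ln T$. The agent runs CTS-G with $\gamma=1$: in round $t$ draw independently $w_{a,t}\sim\mathcal{N}\big(\hat r_{a,n_{a,t}},\frac{m\ln t}{n_{a,t}+1}\big)$ and play the $m$ arms with largest $w_{a,t}$; $n_{a,t}$ is the number of plays of $a$ in rounds $1,\dots,t-1$, $\hat r_{a,n_{a,t}}$ its empirical mean ($0$ if unplayed). $\mathcal{F}_{t-1}$ is the history up to the end of round $t-1$. $H:=\lceil64m\ln T/\Delta^2\rceil$ and $\bar G_t:=\{a\in G: n_{a,t}\ge H\}$. *)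

(* Defs.v *)
From HB Require Import structures.
From mathcomp Require Import all_boot all_order all_algebra.
From mathcomp Require Import all_classical all_reals all_analysis.
From mathcomp Require Import normal_distribution.
Set Implicit Arguments. Unset Strict Implicit. Unset Printing Implicit Defensive.
Import Order.TTheory GRing.Theory Num.Theory.
Local Open Scope ring_scope.

Section CTSG.
Variable R : realType.

Definition gapDelta (N T : nat) : R :=
  4 / 5 * Num.sqrt (N%:R * ln (T%:R : R) / T%:R).

Definition reward (N : nat) (G : {set 'I_N}) (Delta : R) (a : 'I_N) : R :=
  if a \in G then Delta else 0.

Definition Hthr (m T : nat) (Delta : R) : int :=
  Num.ceil (64 * m%:R * ln (T%:R : R) / Delta ^+ 2).

(* A history up to the end of round t-1: S s is the set of m arms played in
   round s (s = 1, ..., t-1). *)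
Definition nplays (N : nat) (S : nat -> {set 'I_N}) (a : 'I_N) (t : nat) : nat :=
  \sum_(1 <= s < t) (a \in S s).

(* Empirical mean of the observed rewards of a before round t (0 if unplayed,
   since x / 0 = 0). *)
Definition emp_mean (N : nat) (r : 'I_N -> R) (S : nat -> {set 'I_N})
  (a : 'I_N) (t : nat) : R :=
  (\sum_(1 <= s < t | a \in S s) r a) / (nplays S a t)%:R.

(* CTS-G with gamma = 1: conditional law of w_{a,t} given F_{t-1} is
   N(emp_mean, m ln t / (n_{a,t} + 1)); normal_prob takes the standard deviation. *)
Definition ctsg_sample_law (N m : nat) (r : 'I_N -> R) (S : nat -> {set 'I_N})
  (a : 'I_N) (t : nat) : set R -> \bar R :=
  normal_prob (emp_mean r S a t)
    (Num.sqrt (m%:R * ln (t%:R : R) / (nplays S a t).+1%:R)).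

End CTSG.

(* Main.v *)
Require Import Defs.
From HB Require Import structures.
From mathcomp Require Import all_boot all_order all_algebra.
From mathcomp Require Import all_classical all_reals all_analysis.
From mathcomp Require Import normal_distribution.
From mathcomp Require Import ring lra zify measurable_realfun.
Import Order.TTheory GRing.Theory Num.Theory.
Local Open Scope ring_scope.

Lemma half_normal (R : realType) (mu0 s tau : R) : s != 0 -> mu0 <= tau ->
  ((1/2 : R)%:E <= normal_prob mu0 s [set x | (x < tau)%R]%classic)%E.
Proof.
move=> s0 le.
have f0 x : 0 <= normal_pdf mu0 s x := normal_pdf_ge0 _ _ _.
have cf := @continuous_normal_pdf R mu0 s s0.
have mf : measurable_fun setT (normal_pdf mu0 s) := measurable_normal_pdf _ _.
have sym x : normal_pdf mu0 s (mu0 * 2 - x) = normal_pdf mu0 s x.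
  rewrite /normal_pdf (negbTE s0) /normal_fun.
  have -> : (mu0 * 2 - x - mu0) ^+ 2 = (x - mu0) ^+ 2 by rewrite -sqrrN; congr (_ ^+ 2); ring.
  by [].
have dF : (fun x : R => mu0 * 2 - x)^`()%classic = cst (-1).
  by apply/funext => z; rewrite derive1E deriveB// derive_cst derive_id sub0r.
have h1 := @decreasing_ge0_integration_by_substitutiony R (fun x => mu0*2 - x) (normal_pdf mu0 s) mu0.
have hFa : mu0 * 2 - mu0 = mu0 by ring.
rewrite hFa dF in h1.
have h2 : (mu0 * 2 - x @[x --> +oo] --> -oo)%classic.
  have -> : (fun x : R => mu0 * 2 - x) = (fun x => - (x + - (mu0 * 2))).
    by apply/funext => x; ring.
  by apply/cvgNrNy; exact: cvg_addrr.
have E1 : (\int[lebesgue_measure]_(x in `]-oo, mu0]) (normal_pdf mu0 s x)%:E =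
   \int[lebesgue_measure]_(x in `[mu0, +oo[) (normal_pdf mu0 s x)%:E)%E.
rewrite h1 {h1}; last 8 first.
- by move=> x y _ _ xy; rewrite ltrD2l ltrN2.
- by move=> ? _; exact: cvg_cst.
- exact: is_cvg_cst.
- exact: is_cvg_cst.
- split.
  + by move=> x _; apply: derivableB.
  + apply: cvg_at_right_filter; apply: cvgB; [exact: cvg_cst | exact: cvg_id].
- exact: h2.
- apply: (@continuous_subspaceT R^o R^o); exact: cf.
- by move=> x _.
  apply: eq_integral => x _; congr EFin.
  by rewrite !fctE /= opprK mulr1 sym.
set X := (\int[lebesgue_measure]_(x in `]-oo, mu0[) (normal_pdf mu0 s x)%:E)%E.
have EX : X = (\int[lebesgue_measure]_(x in `]-oo, mu0]) (normal_pdf mu0 s x)%:E)%E.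
  by apply: integral_itv_bndo_bndc; apply/measurable_EFinP/measurable_funTS.
have tot : (X + X = 1%:E)%E.
  rewrite {2}EX E1 /X -ge0_integral_setU //=.
  - by rewrite -setCitvl setUv; exact: integral_normal_pdf.
  - by apply/measurable_EFinP/measurable_funTS.
  - by move=> x _; rewrite lee_fin.
  - by rewrite -setCitvl; exact/disj_setPCl.
have X0 : (0 <= X)%E by apply: integral_ge0 => x _; rewrite lee_fin.
have Xfin : X \is a fin_num.
  rewrite ge0_fin_numE //; apply: (le_lt_trans (y := (X + X)%E)).
    by rewrite leeDl.
  by rewrite tot ltry.
have Xh : X = (1/2)%:E.
  move: tot; rewrite -(fineK Xfin) -EFinD => -[] h.
  by congr EFin; lra.
rewrite -Xh /X /normal_prob.
apply: ge0_subset_integral => //=.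
- by rewrite -set_itvNyo; exact: measurable_itv.
- by apply/measurable_EFinP/measurable_funTS.
- by move=> x _; rewrite lee_fin; exact: f0.
- move=> x /=; rewrite in_itv /= => xm; exact: lt_le_trans xm le.
Qed.

Theorem lemma8 (R : realType) (N m T : nat) (G : {set 'I_N})
  (hm : (1 <= m)%N) (hN : (400 * m <= N)%N) (hG : #|G| = m)
  (hT2 : (2 <= T)%N)
  (hT : 16 / 25 * N%:R * ln (T%:R : R) < T%:R)
  (S : nat -> {set 'I_N}) (hS : forall s, #|S s| = m)
  (t : nat) (ht1 : (1 <= t)%N) (htT : (t <= T)%N)
  (a : 'I_N) (haG : a \in G)
  (haH : (Hthr m T (gapDelta R N T) <= (nplays S a t)%:Z)%R) :
  ((1 / 2 : R)%:E <=
   ctsg_sample_law m (reward G (gapDelta R N T)) S a t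
     ([set x : R | (x < gapDelta R N T + gapDelta R N T / 4)%R]%classic))%E.
Proof.
rewrite /ctsg_sample_law.
move: haH; set D := gapDelta R N T => haH.
have lnT : 0 < ln (T%:R : R) by apply: ln_gt0; rewrite ltr1n.
have N0 : (0 < N)%N by lia.
have T0 : (0 < T)%N by lia.
have D0 : 0 < D.
  rewrite /D /gapDelta mulr_gt0 // sqrtr_gt0 divr_gt0 ?ltr0n // mulr_gt0 // ltr0n //.
have n1 : (1 <= nplays S a t)%N.
  have : (0 < Hthr m T D)%R.
    rewrite /Hthr ceil_gt0 divr_gt0 ?exprn_gt0 // mulr_gt0 // mulr_gt0 // ltr0n; lia.
  move=> h; have := lt_le_trans h haH; rewrite ltz_nat; lia.
have t2 : (2 <= t)%N.
  case: (leqP 2 t) => // ht.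
  move: n1; rewrite /nplays big_geq //; lia.
have sig : Num.sqrt (m%:R * ln (t%:R : R) / (nplays S a t).+1%:R) != 0.
  rewrite gt_eqF // sqrtr_gt0 divr_gt0 ?ltr0n // mulr_gt0 ?ltr0n //.
  by apply: ln_gt0; rewrite ltr1n.
have mean : emp_mean (reward G D) S a t = D.
  rewrite /emp_mean /reward haG.
  have -> : \sum_(1 <= s < t | a \in S s) D = (nplays S a t)%:R * D.
    rewrite big_mkcond /= /nplays natr_sum mulr_suml.
    by apply: eq_bigr => s _; case: (a \in S s); rewrite ?mul1r ?mul0r.
  by rewrite mulrAC divff ?mul1r // pnatr_eq0 -lt0n.
apply: half_normal => //.
rewrite mean; lra.
Qed.
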